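(* For any $\lambda,\mu\in\mathbb C\setminus\{\lambda_1,\dots,\lambda_N\}$ and any positive integers $k,l$, $$\{\operatorname{tr}L^k(\lambda),\operatorname{tr}L^l(\mu)\}=0$$ identically on the phase space.
   Context: Fix $N\ge1$, distinct nonzero real $\lambda_1,\dots,\lambda_N$. Phase space: $\mathbb C^{3N}\cong\mathbb R^{6N}$ with complex coordinates $\phi_{j\alpha}$ ($j=1,2,3$, $\alpha=1,\dots,N$) and Wirtinger derivatives $\partial/\partial\phi_{j\alpha}$, $\partial/\partial\bar\phi_{j\alpha}$. The Poisson bracket (associated with the symplectic form $\omega=\mathrm{i}\sum_{j,\alpha}d\bar\phi_{j\alpha}\wedge d\phi_{j\alpha}$) is $$\{\xi,\eta\}=-\mathrm{i}\sum_{j=1}^3\sum_{\alpha=1}^N\Big(\frac{\partial\xi}{\partial\phi_{j\alpha}}\frac{\partial\eta}{\partial\bar\phi_{j\alpha}}-\frac{\partial\xi}{\partial\bar\phi_{j\alpha}}\frac{\partial\eta}{\partial\phi_{j\alpha}}\Big).$$ With $F_\alpha=(\phi_{1\alpha},\phi_{2\alpha},\phi_{3\alpha})^T$ and $C=\operatorname{diag}(1,-1,0)$, $$L(\lambda)=C+\sum_{\alpha=1}^N\frac{1}{\lambda-\lambda_\alpha}F_\alpha F_\alpha^*,$$ a $3\times3$ matrix whose entries are functions on phase space. *)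

(* Defs.v *)
From HB Require Import structures.
From mathcomp Require Import all_boot all_order all_algebra.
From mathcomp Require Import all_classical all_reals.
From mathcomp Require Import topology normedtype derive.
From mathcomp Require Import complex.
Set Implicit Arguments. Unset Strict Implicit. Unset Printing Implicit Defensive.
Import Order.TTheory GRing.Theory Num.Theory.
Import numFieldNormedType.Exports.
Local Open Scope ring_scope.

Section Defs.
Variable R : realType.

Definition cplx (x : R) : R[i] := Complex x 0.
Definition iC : R[i] := Complex 0 1.
Definition reC (z : R[i]) : R := let: Complex x _ := z in x.
Definition imC (z : R[i]) : R := let: Complex _ y := z in y.

Definition phase (N : nat) := 'I_3 -> 'I_N -> R[i].

Definition rderiv0 (g : R -> R[i]) : R[i] :=
  Complex (derive1 (fun t => reC (g t)) 0) (derive1 (fun t => imC (g t)) 0).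

Definition dirD N (F : phase N -> R[i]) (phi : phase N) (v : phase N) : R[i] :=
  rderiv0 (fun t => F (fun j a => phi j a + cplx t * v j a)).

Definition ecoord N (j0 : 'I_3) (a0 : 'I_N) (c : R[i]) : phase N :=
  fun j a => if (j == j0) && (a == a0) then c else 0.

(* Wirtinger derivatives: with phi = x + i y,
   d/dphi = (d/dx - i d/dy)/2,  d/dphibar = (d/dx + i d/dy)/2 *)
Definition wirt N (F : phase N -> R[i]) (phi : phase N) j a : R[i] :=
  (dirD F phi (ecoord j a 1) - iC * dirD F phi (ecoord j a iC)) / 2%:R.
Definition wirtbar N (F : phase N -> R[i]) (phi : phase N) j a : R[i] :=
  (dirD F phi (ecoord j a 1) + iC * dirD F phi (ecoord j a iC)) / 2%:R.

Definition pbracket N (xi eta : phase N -> R[i]) (phi : phase N) : R[i] :=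
  - iC * \sum_(j < 3) \sum_(a < N)
      (wirt xi phi j a * wirtbar eta phi j a - wirtbar xi phi j a * wirt eta phi j a).

Definition Cmat : 'M[R[i]]_3 :=
  \matrix_(i < 3, j < 3) (if i == j then
       (if val i == 0%N then 1 else if val i == 1%N then -1 else 0) else 0).

Definition Lax N (lams : 'I_N -> R) (lam : R[i]) (phi : phase N) : 'M[R[i]]_3 :=
  Cmat + \matrix_(i < 3, j < 3)
     \sum_(a < N) phi i a * (phi j a)^* / (lam - cplx (lams a)).

End Defs.

(* Main.v *)
Require Import Defs.
From HB Require Import structures.
From mathcomp Require Import all_boot all_order all_algebra.
From mathcomp Require Import all_classical all_reals.
From mathcomp Require Import complex.
From mathcomp Require Import topology normedtype derive.
From mathcomp Require Import ring.
Import Order.TTheory GRing.Theory Num.Theory.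
Import numFieldNormedType.Exports.
Local Open Scope ring_scope.



Section S.
Variable R : realType.

Lemma reC_add (a b : R[i]) : reC (a + b) = reC a + reC b.
Proof. by case: a => ? ?; case: b. Qed.
Lemma imC_add (a b : R[i]) : imC (a + b) = imC a + imC b.
Proof. by case: a => ? ?; case: b. Qed.
Lemma reC_mulc (a : R[i]) (t : R) : reC (a * cplx t) = reC a * t.
Proof. by case: a => x y /=; rewrite mulr0 subr0. Qed.
Lemma imC_mulc (a : R[i]) (t : R) : imC (a * cplx t) = imC a * t.
Proof. by case: a => x y /=; rewrite mulr0 add0r. Qed.
Lemma cplxX (t : R) n : cplx t ^+ n = cplx (t ^+ n).
Proof.
have := rmorphXn (real_complex R) n t. by [].
Qed.

Lemma reC_sum (n : nat) (F : 'I_n -> R[i]) : reC (\sum_(i < n) F i) = \sum_(i < n) reC (F i).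
Proof. by elim/big_rec2: _ => //= i a b _ IH; rewrite reC_add IH. Qed.
Lemma imC_sum (n : nat) (F : 'I_n -> R[i]) : imC (\sum_(i < n) F i) = \sum_(i < n) imC (F i).
Proof. by elim/big_rec2: _ => //= i a b _ IH; rewrite imC_add IH. Qed.

Lemma derive_real_poly (f : nat -> R) n :
  derive1 (fun t : R => \sum_(i < n.+2) f i * t ^+ i) 0 = f 1%N.
Proof.
pose p : {poly R} := \poly_(i < n.+2) f i.
have -> : (fun t : R => \sum_(i < n.+2) f i * t ^+ i) = horner p.
  apply/funext => t; rewrite (@horner_coef_wide _ n.+2); last by rewrite size_poly.
  by apply: eq_bigr => i _; rewrite coef_poly ltn_ord.
by rewrite -derivE horner_coef0 coef_deriv coef_poly /= mulr1n.
Qed.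

Lemma rderiv0_poly (q : {poly R[i]}) : rderiv0 (fun t => q.[cplx t]) = q`_1.
Proof.
rewrite /rderiv0 /=.
have E : forall t, q.[cplx t] = \sum_(i < (size q).+2) q`_i * cplx t ^+ i.
  by move=> t; rewrite (@horner_coef_wide _ (size q).+2) // ltnW.
have -> : (fun t => reC q.[cplx t]) = (fun t => \sum_(i < (size q).+2) reC q`_i * t ^+ i).
  by apply/funext => t; rewrite E reC_sum; apply: eq_bigr => i _; rewrite cplxX reC_mulc.
have -> : (fun t => imC q.[cplx t]) = (fun t => \sum_(i < (size q).+2) imC q`_i * t ^+ i).
  by apply/funext => t; rewrite E imC_sum; apply: eq_bigr => i _; rewrite cplxX imC_mulc.
by rewrite (derive_real_poly (fun n => reC q`_n)) (derive_real_poly (fun n => imC q`_n)); case: (q`_1).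
Qed.
End S.



Section S2.
Variable R : realType.
Variable N : nat.
Variable lams : 'I_N -> R.

Lemma conj_cplx (t : R) : (cplx t)^* = cplx t.
Proof. exact: conjc_real. Qed.

Definition Lp (lam : R[i]) (phi v : phase R N) : 'M[{poly R[i]}]_3 :=
  map_mx polyC (Cmat R) + \matrix_(i < 3, j < 3) \sum_(a < N)
    ((phi i a)%:P + 'X * (v i a)%:P) * (((phi j a)^*)%:P + 'X * ((v j a)^*)%:P)
      * ((lam - cplx (lams a))^-1)%:P.

Lemma Lp_eval lam phi v t :
  map_mx (horner_eval (cplx t)) (Lp lam phi v) =
  Lax lams lam (fun j a => phi j a + cplx t * v j a).
Proof.
apply/matrixP => i j; rewrite !mxE /horner_eval hornerD hornerC horner_sum.
congr (_ + _); apply: eq_bigr => a _.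
by rewrite !hornerE rmorphD rmorphM /= conj_cplx.
Qed.

End S2.



Section S3.
Variable K : comNzRingType.
Variable n : nat.
Local Notation c0 P := (map_mx (coefp 0) P).
Local Notation c1 P := (map_mx (coefp 1) P).

Lemma coef1M (p q : {poly K}) : (p * q)`_1 = p`_0 * q`_1 + p`_1 * q`_0.
Proof. by rewrite coefM !big_ord_recr big_ord0 /= add0r. Qed.

Lemma c1M (P Q : 'M[{poly K}]_n.+1) : c1 (P *m Q) = c0 P *m c1 Q + c1 P *m c0 Q.
Proof.
apply/matrixP => i j; rewrite !mxE /= coef_sum -big_split /=.
by apply: eq_bigr => l _; rewrite !mxE coef1M.
Qed.

Lemma c0M (P Q : 'M[{poly K}]_n.+1) : c0 (P *m Q) = c0 P *m c0 Q.
Proof.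
apply/matrixP => i j; rewrite !mxE /= coef_sum.
by apply: eq_bigr => l _; rewrite !mxE coefM big_ord1.
Qed.

Lemma c0X (P : 'M[{poly K}]_n.+1) k : c0 (P ^+ k) = (c0 P) ^+ k.
Proof.
elim: k => [|k ih].
  by apply/matrixP => i j; rewrite !mxE /= coefMn coef1 mulr1n; case: (i == j).
by rewrite !exprSr -!mulmxE c0M ih.
Qed.

Lemma c1_one : c1 (1 : 'M[{poly K}]_n.+1) = 0.
Proof. by apply/matrixP => i j; rewrite !mxE /= coefMn coef1 mul0rn. Qed.

Lemma mxXD (A : 'M[K]_n.+1) i j : A ^+ i *m A ^+ j = A ^+ (i + j).
Proof. by rewrite mulmxE exprD. Qed.
Lemma mxXS (A : 'M[K]_n.+1) i : A *m A ^+ i = A ^+ i.+1.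
Proof. by rewrite mulmxE exprS. Qed.

Lemma tr_c1X (P : 'M[{poly K}]_n.+1) k m :
  \tr (c1 (P ^+ k) *m (c0 P) ^+ m) = k%:R * \tr (c1 P *m (c0 P) ^+ (k.-1 + m)).
Proof.
elim: k m => [|k ih] m.
  by rewrite expr0 c1_one mul0mx mxtrace0 mul0r.
rewrite exprSr -mulmxE c1M c0X mulmxDl mxtraceD -mulmxA mxtrace_mulC -mulmxA.
rewrite -mulmxA mxXD mxXS ih /=.
rewrite addnC mulrSr mulrDl mul1r addrC; congr (_ + _).
by case: k {ih} => [|k]; rewrite ?mul0r //= addnS.
Qed.
End S3.



Section S4.
Variable R : realType.
Variable N : nat.
Variable lams : 'I_N -> R.
Local Notation c0 P := (map_mx (coefp 0) P).
Local Notation c1 P := (map_mx (coefp 1) P).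

Definition Bv (lam : R[i]) (phi v : phase R N) : 'M[R[i]]_3 :=
  \matrix_(i < 3, j < 3) \sum_(a < N)
    (phi i a * (v j a)^* + v i a * (phi j a)^*) / (lam - cplx (lams a)).

Lemma coefLin (a b : R[i]) : (a%:P + 'X * b%:P)`_0 = a /\ (a%:P + 'X * b%:P)`_1 = b.
Proof. by rewrite !coefD !coefC !coefXM !coefC /= addr0 add0r. Qed.

Lemma c0Lp lam phi v : c0 (Lp _ _ lams lam phi v) = Lax lams lam phi.
Proof.
apply/matrixP => i j; rewrite !mxE /= coefD coefC /= coef_sum; congr (_ + _).
apply: eq_bigr => a _; rewrite coefMC coefM big_ord1 /=.
by have [-> _] := coefLin (phi i a) (v i a); have [-> _] := coefLin ((phi j a)^*) ((v j a)^*).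
Qed.

Lemma c1Lp lam phi v : c1 (Lp _ _ lams lam phi v) = Bv lam phi v.
Proof.
apply/matrixP => i j; rewrite !mxE /= coefD coefC /= coef_sum add0r.
apply: eq_bigr => a _; rewrite coefMC coef1M.
have [-> ->] := coefLin (phi i a) (v i a); have [-> ->] := coefLin ((phi j a)^*) ((v j a)^*).
by [].
Qed.

Lemma coef1_tr (P : 'M[{poly R[i]}]_3) : (\tr P)`_1 = \tr (c1 P).
Proof. by rewrite /mxtrace coef_sum; apply: eq_bigr => i _; rewrite mxE. Qed.

Lemma dirD_tr lam phi v k :
  dirD (fun p => \tr (Lax lams lam p ^+ k)) phi v =
  k%:R * \tr (Bv lam phi v *m Lax lams lam phi ^+ k.-1).
Proof.
rewrite /dirD.
have -> : (fun t => \tr (Lax lams lam (fun j a => phi j a + cplx t * v j a) ^+ k)) =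
          (fun t => (\tr (Lp _ _ lams lam phi v ^+ k)).[cplx t]).
  apply/funext => t; rewrite -Lp_eval -rmorphXn /=.
  by rewrite (trace_map_mx (horner_eval (cplx t))).
rewrite rderiv0_poly coef1_tr.
have := @tr_c1X _ _ (Lp _ _ lams lam phi v : 'M_(2.+1)) k 0.
by rewrite expr0 mulmx1 addn0 c1Lp c0Lp.
Qed.
End S4.



Section S5.
Variable R : realType.
Variable N : nat.
Variable lams : 'I_N -> R.

Lemma sum_if n (F : 'I_n -> R[i]) j0 : \sum_(j < n) (if j == j0 then F j else 0) = F j0.
Proof. by rewrite -big_mkcond big_pred1_eq. Qed.

Lemma BvE lam phi j0 a0 c i j :
  Bv _ _ lams lam phi (ecoord j0 a0 c) i j =
  (phi i a0 * (if j == j0 then c^* else 0) + (if i == j0 then c else 0) * (phi j a0)^*)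
   / (lam - cplx (lams a0)).
Proof.
rewrite mxE (bigD1 a0) //= big1 ?addr0.
  by rewrite /ecoord !eqxx !andbT; case: (j == j0); case: (i == j0); rewrite ?rmorph0.
move=> a /negbTE ne; rewrite /ecoord ne !andbF rmorph0; ring.
Qed.

Definition S1 (phi : phase R N) (X : 'M[R[i]]_3) j a := \sum_(i < 3) (phi i a)^* * X i j.
Definition S2 (phi : phase R N) (X : 'M[R[i]]_3) j a := \sum_(i < 3) X j i * phi i a.

Lemma trB lam phi j0 a0 c X :
  \tr (Bv _ _ lams lam phi (ecoord j0 a0 c) *m X) =
  (c * S1 phi X j0 a0 + c^* * S2 phi X j0 a0) / (lam - cplx (lams a0)).
Proof.
rewrite /mxtrace.
under eq_bigr => i _ do rewrite mxE.
under eq_bigr => i _ do under eq_bigr => j _ do rewrite BvE.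
set d := (lam - _).
transitivity (\sum_(i < 3) \sum_(j < 3)
   ((if j == j0 then phi i a0 * c^* * X j i / d else 0) +
    (if i == j0 then c * (phi j a0)^* * X j i / d else 0))).
  apply: eq_bigr => i _; apply: eq_bigr => j _.
  by case: (j == j0); case: (i == j0); ring.
under eq_bigr => i _ do rewrite big_split /= sum_if.
rewrite big_split /= exchange_big /=.
under [X in _ + X = _]eq_bigr => j _ do rewrite sum_if.
rewrite /S1 /S2 mulrDl addrC !big_distrr !big_distrl /=; congr (_ + _);
  by apply: eq_bigr => i _; ring.
Qed.

End S5.



Section S6.
Variable R : realType.
Variable N : nat.
Variable lams : 'I_N -> R.

Lemma iC_conj : (iC R)^* = - iC R.
Proof. change (conjc (iC R) = - iC R). by rewrite /iC; simpc. Qed.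
Lemma iC_sq : iC R * iC R = -1.
Proof. by rewrite /iC; simpc. Qed.


Lemma two_nz : (2%:R : R[i]) != 0.
Proof. by rewrite pnatr_eq0. Qed.

Lemma wirt_tr lam phi k j a :
  wirt (fun p => \tr (Lax lams lam p ^+ k)) phi j a =
  k%:R * S1 _ _ phi (Lax lams lam phi ^+ k.-1) j a / (lam - cplx (lams a)).
Proof.
rewrite /wirt !dirD_tr !trB iC_conj rmorph1.
set S := S1 _ _ _ _ _ _; set T := S2 _ _ _ _ _ _; set d := (lam - _).
transitivity ((k%:R * (S + T) / d - k%:R * (iC R * iC R) * (S - T) / d) / 2%:R).
  by congr (_ / _); ring.
rewrite iC_sq.
have -> : k%:R * (S + T) / d - k%:R * -1 * (S - T) / d = 2%:R * (k%:R * S / d) by ring.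
by rewrite mulrC mulKf // two_nz.
Qed.

Lemma wirtbar_tr lam phi k j a :
  wirtbar (fun p => \tr (Lax lams lam p ^+ k)) phi j a =
  k%:R * S2 _ _ phi (Lax lams lam phi ^+ k.-1) j a / (lam - cplx (lams a)).
Proof.
rewrite /wirtbar !dirD_tr !trB iC_conj rmorph1.
set S := S1 _ _ _ _ _ _; set T := S2 _ _ _ _ _ _; set d := (lam - _).
transitivity ((k%:R * (S + T) / d + k%:R * (iC R * iC R) * (S - T) / d) / 2%:R).
  by congr (_ / _); ring.
rewrite iC_sq.
have -> : k%:R * (S + T) / d + k%:R * -1 * (S - T) / d = 2%:R * (k%:R * T / d) by ring.
by rewrite mulrC mulKf // two_nz.
Qed.
End S6.



Section S7.
Variable R : realType.
Variable N : nat.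
Variable lams : 'I_N -> R.
Variable phi : phase R N.

Definition Q a (Z : 'M[R[i]]_3) := \sum_(i < 3) \sum_(m < 3) (phi i a)^* * Z i m * phi m a.

Lemma QL (X Y : 'M[R[i]]_3) a :
  \sum_(j < 3) S1 _ _ phi X j a * S2 _ _ phi Y j a = Q a (X *m Y).
Proof.
rewrite /S1 /S2 /Q.
under eq_bigr => j _ do rewrite big_distrl /=.
under eq_bigr => j _ do under eq_bigr => i _ do rewrite big_distrr /=.
under [RHS]eq_bigr => i _ do under eq_bigr => m _ do rewrite mxE big_distrr big_distrl /=.
rewrite exchange_big /=; apply: eq_bigr => i _.
rewrite exchange_big /=; apply: eq_bigr => m _.
by apply: eq_bigr => j _; ring.
Qed.

Definition LaxM (w : 'I_N -> R[i]) : 'M[R[i]]_3 :=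
  \matrix_(m < 3, i < 3) \sum_(a < N) phi m a * (phi i a)^* * w a.

Lemma Qsum (w : 'I_N -> R[i]) Z : \sum_(a < N) w a * Q a Z = \tr (Z *m LaxM w).
Proof.
rewrite /Q /mxtrace.
under eq_bigr => a _ do rewrite big_distrr /=.
under eq_bigr => a _ do under eq_bigr => i _ do rewrite big_distrr /=.
under [RHS]eq_bigr => i _ do rewrite mxE.
under [RHS]eq_bigr => i _ do under eq_bigr => m _ do rewrite mxE big_distrr /=.
rewrite exchange_big /=; apply: eq_bigr => i _.
rewrite exchange_big /=; apply: eq_bigr => m _.
by apply: eq_bigr => a _; ring.
Qed.

Lemma LaxM_eq mu : LaxM (fun a => (mu - cplx (lams a))^-1) = Lax lams mu phi - Cmat R.
Proof.
rewrite /Lax [Cmat R + _]addrC addrK; apply/matrixP => m i; rewrite !mxE.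
by apply: eq_bigr.
Qed.

Lemma trF1 (X Y L : 'M[R[i]]_3) : Y *m L = L *m Y ->
  \tr ((X *m Y) *m L) = \tr ((Y *m X) *m L).
Proof.
move=> c; rewrite -mulmxA c mulmxA mxtrace_mulC mulmxA; done.
Qed.

Lemma trF2 (X Y L : 'M[R[i]]_3) : X *m L = L *m X ->
  \tr ((X *m Y) *m L) = \tr ((Y *m X) *m L).
Proof.
move=> c; rewrite -mulmxA [in LHS]mxtrace_mulC -[in LHS]mulmxA -c mulmxA; done.
Qed.

Lemma commXp (L : 'M[R[i]]_3) n : L ^+ n *m L = L *m L ^+ n.
Proof. by rewrite mulmxE -exprSr exprS. Qed.

End S7.

Theorem lemma3 (R : realType) (N : nat) (lams : 'I_N -> R)
  (hN : (0 < N)%N) (hinj : injective lams) (hnz : forall a, lams a != 0)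
  (lam mu : R[i])
  (hlam : forall a, lam != cplx (lams a)) (hmu : forall a, mu != cplx (lams a))
  (k l : nat) (hk : (0 < k)%N) (hl : (0 < l)%N) (phi : phase R N) :
  pbracket (fun p => \tr (Lax lams lam p ^+ k)) (fun p => \tr (Lax lams mu p ^+ l)) phi = 0.
Proof.
rewrite /pbracket.
under eq_bigr => j _ do under eq_bigr => a _ do rewrite !wirt_tr !wirtbar_tr.
set X := Lax lams lam phi ^+ k.-1; set Y := Lax lams mu phi ^+ l.-1.
suff -> : \sum_(j < 3) \sum_(a < N)
  (k%:R * S1 _ _ phi X j a / (lam - cplx (lams a)) * (l%:R * S2 _ _ phi Y j a / (mu - cplx (lams a))) -
   k%:R * S2 _ _ phi X j a / (lam - cplx (lams a)) * (l%:R * S1 _ _ phi Y j a / (mu - cplx (lams a)))) = 0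
  by rewrite mulr0.
rewrite exchange_big /=.
transitivity (\sum_(a < N) (k%:R * l%:R * ((lam - cplx (lams a))^-1 * (mu - cplx (lams a))^-1))
    * (Q _ _ phi a (X *m Y) - Q _ _ phi a (Y *m X))).
  apply: eq_bigr => a _.
  have E : \sum_(j < 3) S2 _ _ phi X j a * S1 _ _ phi Y j a = Q _ _ phi a (Y *m X).
    by rewrite -QL; apply: eq_bigr => j _; rewrite mulrC.
  rewrite -QL -E mulrBr !big_distrr -sumrB /=.
  by apply: eq_bigr => j _; ring.
have [E|hne] := eqVneq lam mu.
  subst mu; apply: big1 => a _.
  have -> : Y *m X = X *m Y by rewrite /X /Y !mulmxE -!exprD addnC.
  by rewrite subrr mulr0.
transitivity (k%:R * l%:R / (lam - mu) *
  (\sum_(a < N) (mu - cplx (lams a))^-1 * (Q _ _ phi a (X *m Y) - Q _ _ phi a (Y *m X)) -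
   \sum_(a < N) (lam - cplx (lams a))^-1 * (Q _ _ phi a (X *m Y) - Q _ _ phi a (Y *m X)))).
  rewrite -sumrB big_distrr /=; apply: eq_bigr => a _.
  have hd : lam - cplx (lams a) != 0 by rewrite subr_eq0 hlam.
  have he : mu - cplx (lams a) != 0 by rewrite subr_eq0 hmu.
  have hlm : lam - mu != 0 by rewrite subr_eq0.
  by field; rewrite hd he hlm.
under eq_bigr => a _ do rewrite mulrBr.
under [in Z in _ * (_ - Z)]eq_bigr => a _ do rewrite mulrBr.
rewrite !sumrB.
rewrite !(Qsum _ _ phi (fun a => (mu - cplx (lams a))^-1)).
rewrite !(Qsum _ _ phi (fun a => (lam - cplx (lams a))^-1)).
rewrite !LaxM_eq !mulmxBr !linearB /=.
rewrite (@trF1 R X _ _ (commXp _ (Lax lams mu phi) l.-1)) (@trF2 R _ Y _ (commXp _ (Lax lams lam phi) k.-1)).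
ring.
Qed.
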